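(* Consider a cellular network with $n$ base stations $\mathcal{N}=\{1,\dots,n\}$, base station $i$ serving a nonempty set $\mathcal{J}_i$ of users (pairwise disjoint), channel gains $g_{kj}>0$ and noise power $\sigma^2>0$. Let a load vector $\mathbf{x}>\mathbf{0}$ and a rate vector $\mathbf{r}>\mathbf{0}$ be given. For $\mathbf{p}\in\mathbb{R}^n_+$ and each $i$, let $h_i(\bar{\mathbf{p}}_i;\mathbf{x},\mathbf{r})$ be the unique $p_i>0$ satisfying $$1=\sum_{j\in\mathcal{J}_i}\frac{r_{ij}/x_i}{\log\Big(1+p_i\,\frac{g_{ij}}{\sum_{k\ne i}p_kg_{kj}x_k+\sigma^2}\Big)},$$ and let $\mathbf{h}(\mathbf{p};\mathbf{x},\mathbf{r})=(h_1(\bar{\mathbf{p}}_1;\mathbf{x},\mathbf{r}),\dots,h_n(\bar{\mathbf{p}}_n;\mathbf{x},\mathbf{r}))^T$. Then $\mathbf{p}\mapsto\mathbf{h}(\mathbf{p};\mathbf{x},\mathbf{r})$ is a standard interference function.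
   Context: $\log$ is natural logarithm; vector inequalities are componentwise; $\bar{\mathbf{p}}_i$ denotes $\mathbf{p}$ with its $i$th component removed. A function $\mathbf{I}:\mathbb{R}^n_+\to\mathbb{R}^n_+$ is a standard interference function if for all $\mathbf{p}\ge\mathbf{0}$: (positivity) $\mathbf{I}(\mathbf{p})>\mathbf{0}$; (monotonicity) $\mathbf{p}\ge\mathbf{p}'$ implies $\mathbf{I}(\mathbf{p})\ge\mathbf{I}(\mathbf{p}')$; (scalability) for every $\alpha>1$, $\alpha\mathbf{I}(\mathbf{p})>\mathbf{I}(\alpha\mathbf{p})$. *)

(* Defs.v *)
From HB Require Import structures.
From mathcomp Require Import all_boot all_order all_algebra.
From mathcomp Require Import boolp classical_sets reals exp.
Set Implicit Arguments. Unset Strict Implicit. Unset Printing Implicit Defensive.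
Import Order.TTheory GRing.Theory Num.Theory.
Local Open Scope ring_scope.

(* Stations are 'I_n, users are 'I_m; serv j is the station serving user j,
   so J_i = [set j | serv j = i] (these sets are pairwise disjoint). *)

Section Defs.
Variables (R : realType) (n m : nat).

Definition interf (g : 'I_n -> 'I_m -> R) (sigma2 : R) (x : 'I_n -> R)
  (p : 'I_n -> R) (i : 'I_n) (j : 'I_m) : R :=
  \sum_(k < n | k != i) p k * g k j * x k + sigma2.

(* right-hand side of the defining equation, as a function of p_i = q *)
Definition load_eq (serv : 'I_m -> 'I_n) (g : 'I_n -> 'I_m -> R) (sigma2 : R)
  (x : 'I_n -> R) (r : 'I_m -> R) (p : 'I_n -> R) (i : 'I_n) (q : R) : R :=
  \sum_(j < m | serv j == i)
     (r j / x i) / ln (1 + q * (g i j / interf g sigma2 x p i j)).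

Definition h_i serv g sigma2 x r (p : 'I_n -> R) (i : 'I_n) : R :=
  xget 0 [set q : R | 0 < q /\ 1 = load_eq serv g sigma2 x r p i q].

Definition h_vec serv g sigma2 x r : ('I_n -> R) -> ('I_n -> R) :=
  fun p i => h_i serv g sigma2 x r p i.

Definition standard_interference (I : ('I_n -> R) -> ('I_n -> R)) : Prop :=
  (forall p, (forall k, 0 <= p k) -> forall i, 0 < I p i) /\
  (forall p p', (forall k, 0 <= p' k) -> (forall k, p' k <= p k) ->
     forall i, I p' i <= I p i) /\
  (forall p, (forall k, 0 <= p k) -> forall alpha : R, 1 < alpha ->
     forall i, I (fun k => alpha * p k) i < alpha * I p i).

End Defs.

(* Main.v *)
From HB Require Import structures.
From mathcomp Require Import all_boot all_order all_algebra.
From mathcomp Require Import all_classical all_reals all_analysis.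
Import Order.TTheory GRing.Theory Num.Theory.
Import numFieldNormedType.Exports.
Local Open Scope ring_scope.
Require Import Defs.
Lemma term_cont (R : realType) (c A q : R) : 0 < A -> 0 < q ->
  {for q, continuous (fun t : R => c / ln (1 + t * A))}.
Proof.
move=> A0 q0.
apply: continuousM; first exact: cvg_cst.
apply: continuousV.
  by rewrite gt_eqF // ln_gt0 // ltrDl mulr_gt0.
have H1 : {for q, continuous (fun t : R => 1 + t * A)}.
  apply: continuousD; first exact: cvg_cst.
  apply: continuousM; [exact: cvg_id | exact: cvg_cst].
have H2 : {for (1 + q * A), continuous (@ln R)}.
  apply: continuous_ln. by rewrite ltr_wpDr ?ltr01 // ?mulr_ge0 // ltW.
exact: (continuous_comp H1 H2).
Qed.

Lemma sum_cont (R : realType) (m : nat) (P : pred 'I_m) (c A : 'I_m -> R) (q : R) :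
  (forall j, 0 < A j) -> 0 < q ->
  {for q, continuous (fun t : R => \sum_(j < m | P j) c j / ln (1 + t * A j))}.
Proof.
move=> A0 q0.
apply: cvg_big => // [|j _]; first exact: add_continuous.
exact: term_cont.
Qed.
Lemma term_lt (R : realType) (c u v : R) : 0 < c -> 0 < u -> u < v ->
  c / ln (1 + v) < c / ln (1 + u).
Proof.
move=> c0 u0 uv.
have lu : 0 < ln (1 + u) by rewrite ln_gt0 // ltrDl.
have lv : 0 < ln (1 + v) by rewrite ln_gt0 // ltrDl (lt_trans u0).
rewrite ltr_pM2l // ltf_pV2 ?posrE //.
rewrite ltr_ln ?posrE ?ltrD2l //.
  by rewrite (lt_trans ltr01) // ltrDl.
by rewrite (lt_trans ltr01) // ltrDl (lt_trans u0).
Qed.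

Lemma sum_lt (R : realType) (m : nat) (P : pred 'I_m) (c u v : 'I_m -> R) :
  (exists j, P j) -> (forall j, 0 < c j) ->
  (forall j, P j -> 0 < u j /\ u j < v j) ->
  \sum_(j < m | P j) c j / ln (1 + v j) < \sum_(j < m | P j) c j / ln (1 + u j).
Proof.
move=> [j0 Pj0] c0 H.
apply: ltr_sum.
  by apply/hasP; exists j0 => //; rewrite mem_index_enum.
by move=> j /H [u0 uv]; apply: term_lt.
Qed.
Lemma exists_root (R : realType) (m : nat) (P : pred 'I_m) (c a : 'I_m -> R) :
  (exists j, P j) -> (forall j, 0 < c j) -> (forall j, 0 < a j) ->
  exists q : R, 0 < q /\ 1 = \sum_(j < m | P j) c j / ln (1 + q * a j).
Proof.
move=> [j0 Pj0] c0 a0.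
set f := fun t : R => \sum_(j < m | P j) c j / ln (1 + t * a j).
set K := \sum_(j < m) c j + 1.
have K0 : 0 < K by rewrite ltr_wpDl ?ltr01 // sumr_ge0 // => j _; exact: ltW.
set lo := c j0 / (2 * a j0).
have lo0 : 0 < lo by rewrite divr_gt0 // mulr_gt0.
set hi := lo + expR K * \sum_(j < m) (a j)^-1.
have sa j : (a j)^-1 <= \sum_(j < m) (a j)^-1.
  rewrite (bigD1 j) //= lerDl sumr_ge0 // => k _; by rewrite invr_ge0 ltW.
have hipos : 0 <= expR K * \sum_(j < m) (a j)^-1.
  by rewrite mulr_ge0 ?(ltW (expR_gt0 _)) // (le_trans _ (sa j0)) // invr_ge0 ltW.
have lohi : lo <= hi by rewrite lerDl.
have tnn t j : 0 < t -> 0 <= c j / ln (1 + t * a j).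
  move=> t0; rewrite divr_ge0 ?(ltW (c0 j)) // ln_ge0 // lerDl mulr_ge0 // ltW //.
have flo : 1 <= f lo.
  rewrite /f (bigD1 j0) //= -[X in X <= _]addr0; apply: lerD; last first.
    by rewrite sumr_ge0 // => j _; exact: (tnn lo j lo0).
  have l0 : 0 < ln (1 + lo * a j0) by rewrite ln_gt0 // ltrDl mulr_gt0.
  rewrite ler_pdivlMr // mul1r (le_trans (le_ln1Dx _)) //.
    by rewrite (lt_le_trans (ltrN10 R)) // mulr_ge0 // ltW.
  rewrite /lo -mulrA invfM -mulrA mulVf ?gt_eqF // mulr1.
  by rewrite ler_pdivrMr // ler_peMr ?ler1n // ltW.
have fhi : f hi <= 1.
  apply: (@le_trans _ _ (\sum_(j < m | P j) c j / K)).
    apply: ler_sum => j _.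
    have lK : K <= ln (1 + hi * a j).
      rewrite -{1}(expRK K) ler_ln ?posrE ?expR_gt0 //; last first.
        by rewrite ltr_wpDr ?ltr01 // mulr_ge0 // ?ltW // (lt_le_trans lo0).
      rewrite -[X in X <= _]add0r; apply: lerD; first exact: ler01.
      rewrite mulrDl -[X in X <= _]add0r; apply: lerD; first by rewrite mulr_ge0 ?ltW.
      rewrite -mulrA ler_peMr ?(ltW (expR_gt0 _)) //.
      by rewrite -ler_pdivrMr // div1r; exact: sa.
    by rewrite ler_pM2l // lef_pV2 ?posrE // (lt_le_trans K0).
  rewrite -mulr_suml ler_pdivrMr // mul1r /K -[X in X <= _]addr0; apply: lerD; last exact: ler01.
  rewrite [leRHS](bigID P) /= lerDl sumr_ge0 // => j _; exact: ltW.
have cont : ({within `[lo, hi], continuous f})%classic.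
  apply: continuous_in_subspaceT => t; rewrite inE /= in_itv /= => /andP[lt _].
  by apply: sum_cont => //; exact: (lt_le_trans lo0).
have hv : Num.min (f lo) (f hi) <= 1 <= Num.max (f lo) (f hi).
  by rewrite ge_min fhi orbT le_max flo.
have [q qin fq] := IVT lohi cont hv.
exists q; split; last exact: (esym fq).
by move: qin; rewrite in_itv /= => /andP[H _]; exact: (lt_le_trans lo0).
Qed.

Section Main.
Variables (R : realType) (n m : nat) (serv : 'I_m -> 'I_n)
  (g : 'I_n -> 'I_m -> R) (sigma2 : R) (x : 'I_n -> R) (r : 'I_m -> R).
Hypotheses (Hserv : forall i : 'I_n, exists j : 'I_m, serv j = i)
  (Hg : forall k j, 0 < g k j) (Hs : 0 < sigma2) (Hx : forall i, 0 < x i)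
  (Hr : forall j, 0 < r j).


Lemma interf_gt0 p i j : (forall k, 0 <= p k) -> 0 < interf g sigma2 x p i j.
Proof.
move=> p0; rewrite /interf ltr_wpDl // sumr_ge0 // => k _.
by rewrite mulr_ge0 ?mulr_ge0 // ltW.
Qed.

Lemma interf_le p p' i j : (forall k, 0 <= p' k) -> (forall k, p' k <= p k) ->
  interf g sigma2 x p' i j <= interf g sigma2 x p i j.
Proof.
move=> p0 pp; rewrite /interf lerD2r; apply: ler_sum => k _.
by rewrite ler_pM2r ?Hx // ler_pM2r ?Hg.
Qed.

Lemma interf_scal p i j (alpha : R) : (forall k, 0 <= p k) -> 1 < alpha ->
  interf g sigma2 x (fun k => alpha * p k) i j < alpha * interf g sigma2 x p i j.
Proof.
move=> p0 a1; rewrite /interf mulrDr.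
have -> : \sum_(k < n | k != i) alpha * p k * g k j * x k =
          alpha * \sum_(k < n | k != i) p k * g k j * x k.
  by rewrite mulr_sumr; apply: eq_bigr => k _; rewrite !mulrA.
by rewrite ltrD2l ltr_pMl.
Qed.

Lemma hspec p i : (forall k, 0 <= p k) ->
  0 < h_vec serv g sigma2 x r p i /\
  1 = load_eq serv g sigma2 x r p i (h_vec serv g sigma2 x r p i).
Proof.
move=> p0; rewrite /h_vec /h_i.
have [j0 Hj0] := Hserv i.
have H1 : exists j, serv j == i by exists j0; rewrite Hj0.
have H2 : forall j, 0 < r j / x i by move=> j; rewrite divr_gt0.
have H3 : forall j, 0 < g i j / interf g sigma2 x p i j.
  by move=> j; rewrite divr_gt0 // interf_gt0.
have [q [q0 Hq]] := @exists_root R m (fun j => serv j == i) _ _ H1 H2 H3.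
have ex : exists q, [set q | 0 < q /\ 1 = load_eq serv g sigma2 x r p i q]%classic q.
  by exists q; split.
exact: (xgetPex 0 ex).
Qed.

End Main.

Theorem lemma5 (R : realType) (n m : nat) (serv : 'I_m -> 'I_n)
  (g : 'I_n -> 'I_m -> R) (sigma2 : R) (x : 'I_n -> R) (r : 'I_m -> R) :
  (forall i : 'I_n, exists j : 'I_m, serv j = i) ->
  (forall k j, 0 < g k j) ->
  0 < sigma2 ->
  (forall i, 0 < x i) ->
  (forall j, 0 < r j) ->
  standard_interference (h_vec serv g sigma2 x r).
Proof.
move=> Hserv Hg Hs Hx Hr.
have hs := @hspec R n m serv g sigma2 x r Hserv Hg Hs Hx Hr.
have igt0 := @interf_gt0 R n m g sigma2 x Hg Hs Hx.
have ile := @interf_le R n m g sigma2 x Hg Hx.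
have isc := @interf_scal R n m g sigma2 x Hs.
have HP i : exists j, serv j == i by have [j0 Hj0] := Hserv i; exists j0; rewrite Hj0.
have Hc i j : 0 < r j / x i by rewrite divr_gt0.
split; first by move=> p p0 i; case: (hs p i p0).
split.
  move=> p p' p0' pp i.
  have p0 : forall k, 0 <= p k by move=> k; exact: le_trans (p0' k) (pp k).
  case: (hs p i p0) => q0 Hq; case: (hs p' i p0') => q0' Hq'.
  set q := h_vec serv g sigma2 x r p i in q0 Hq *.
  set q' := h_vec serv g sigma2 x r p' i in q0' Hq' *.
  rewrite leNgt; apply/negP => lt.
  have key : load_eq serv g sigma2 x r p' i q' < load_eq serv g sigma2 x r p i q.
    rewrite /load_eq; apply: sum_lt => // j _.
    split; first by rewrite mulr_gt0 // divr_gt0 // igt0.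
    apply: (@lt_le_trans _ _ (q' * (g i j / interf g sigma2 x p i j))).
      by rewrite ltr_pM2r // divr_gt0 // igt0.
    rewrite ler_pM2l // ler_pM2l ?Hg // lef_pV2 ?posrE ?igt0 //.
    exact: ile.
  by move: key; rewrite -Hq -Hq' ltxx.
move=> p p0 alpha a1 i.
have pa0 : forall k, 0 <= alpha * p k.
  by move=> k; rewrite mulr_ge0 // ltW // (lt_trans ltr01).
have a0 : 0 < alpha by rewrite (lt_trans ltr01).
case: (hs p i p0) => q0 Hq; case: (hs _ i pa0) => q0' Hq'.
set q := h_vec serv g sigma2 x r p i in q0 Hq *.
set q' := h_vec serv g sigma2 x r (fun k => alpha * p k) i in q0' Hq' *.
rewrite ltNge; apply/negP => le.
have key : load_eq serv g sigma2 x r (fun k => alpha * p k) i q' <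
           load_eq serv g sigma2 x r p i q.
  rewrite /load_eq; apply: sum_lt => // j _.
  split; first by rewrite mulr_gt0 // divr_gt0 // igt0.
  apply: (@lt_le_trans _ _ (alpha * q * (g i j / interf g sigma2 x (fun k => alpha * p k) i j))); last first.
    by rewrite ler_pM2r // divr_gt0 // igt0.
  rewrite [alpha * q]mulrC -mulrA ltr_pM2l // mulrCA ltr_pM2l ?Hg //.
  have -> : alpha * (interf g sigma2 x (fun k => alpha * p k) i j)^-1 =
            (alpha^-1 * interf g sigma2 x (fun k => alpha * p k) i j)^-1.
    by rewrite invfM invrK.
  rewrite ltf_pV2 ?posrE ?mulr_gt0 ?invr_gt0 ?igt0 //.
  by rewrite ltr_pdivrMl // isc.
by move: key; rewrite -Hq -Hq' ltxx.
Qed.
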